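(* Let $b>0$ and $c>0$ be constants, let $J\subset\mathbb{R}$ be an open interval, and let $a\in L^\infty(J)$ satisfy $0\le a(t)\le C$ for almost every $t\in J$, where $C\ge 0$ is a constant such that $$C< c\,\max\{c,\,2\sqrt b\}.$$ Then there exist constants $\delta>0$ and $M>0$ such that every solution $u\in W^{2,\infty}_{\mathrm{loc}}(J)$ of $$u''(t)+c\,u'(t)+\big(b+a(t)\big)u(t)=0\quad\text{for a.e. } t\in J$$ satisfies $$u(t)^2+u'(t)^2\le M\,\big[u(s)^2+u'(s)^2\big]\,e^{-\delta (t-s)}$$ for all $s,t\in J$ with $s\le t$. *)

(* Defs.v *)
From Stdlib Require Import Reals Lra.
Open Scope R_scope.

(* Open interval (lo, hi) with possibly infinite endpoints: None = -oo / +oo. *)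
Definition in_open_interval (lo hi : option R) (x : R) : Prop :=
  (match lo with None => True | Some l => l < x end) /\
  (match hi with None => True | Some h => x < h end).

Definition null_set (N : R -> Prop) : Prop :=
  forall eps : R, 0 < eps ->
  exists l r : nat -> R,
    (forall n, l n <= r n) /\
    (forall x, N x -> exists n, l n < x < r n) /\
    (forall n, sum_f_R0 (fun k => r k - l k) n <= eps).

Definition ae_on (J : R -> Prop) (P : R -> Prop) : Prop :=
  exists N, null_set N /\ forall t, J t -> ~ N t -> P t.

Definition loc_lipschitz_on (J : R -> Prop) (f : R -> R) : Prop :=
  forall x y, J x -> J y -> exists L : R,
    forall s t, x <= s <= y -> x <= t <= y -> Rabs (f s - f t) <= L * Rabs (s - t).

(* u is a W^{2,oo}_loc(J) solution of u'' + c u' + (b + a) u = 0 a.e. on J: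
   u is differentiable on J with derivative u1 (= u'), u1 is locally
   Lipschitz on J (i.e. u'' in L^oo_loc), and at almost every t in J,
   u1 is differentiable with u''(t) = - c u'(t) - (b + a t) u(t). *)
Definition is_W2inf_loc_solution (J : R -> Prop) (b c : R) (a u u1 : R -> R) : Prop :=
  (forall t, J t -> derivable_pt_lim u t (u1 t)) /\
  loc_lipschitz_on J u1 /\
  ae_on J (fun t => derivable_pt_lim u1 t (- (c * u1 t) - (b + a t) * u t)).

(* Main.v *)
Require Import Defs.
From Stdlib Require Import Reals Lra Lia Classical.
Open Scope R_scope.

Definition phi (l r x : R) := Rmax 0 (Rmin x r - l).
Definition GK (l r : nat -> R) (K : nat) (x : R) :=
  sum_f_R0 (fun k => phi (l k) (r k) x) K.

Lemma phi_mono l r x y : x <= y -> phi l r x <= phi l r y.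
Proof. intros; unfold phi, Rmax, Rmin; repeat destruct Rle_dec; lra. Qed.
Lemma phi_nonneg l r x : 0 <= phi l r x.
Proof. unfold phi, Rmax, Rmin; repeat destruct Rle_dec; lra. Qed.
Lemma phi_le l r x : l <= r -> phi l r x <= r - l.
Proof. intros; unfold phi, Rmax, Rmin; repeat destruct Rle_dec; lra. Qed.
Lemma phi_inc l r x y : l <= x -> x <= y -> y <= r -> phi l r y - phi l r x = y - x.
Proof. intros; unfold phi, Rmax, Rmin; repeat destruct Rle_dec; lra. Qed.

Lemma GK_mono_x l r K x y : x <= y -> GK l r K x <= GK l r K y.
Proof. intros; unfold GK; apply sum_Rle; intros; apply phi_mono; auto. Qed.

Lemma GK_mono_K l r K K' x : (K <= K')%nat -> GK l r K x <= GK l r K' x.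
Proof.
  intros H; induction H; [lra|].
  unfold GK in *; simpl; pose proof (phi_nonneg (l (S m)) (r (S m)) x); lra.
Qed.

Lemma GK_inc l r n K x y : (n <= K)%nat -> x <= y -> l n <= x -> y <= r n ->
  y - x <= GK l r K y - GK l r K x.
Proof.
  intros HK Hxy Hl Hr; induction K.
  - assert (n = 0%nat) by lia; subst; unfold GK; simpl.
    rewrite (phi_inc _ _ x y); lra.
  - unfold GK in *; simpl.
    destruct (Nat.eq_dec n (S K)) as [->|Hn].
    + rewrite <- (phi_inc (l (S K)) (r (S K)) x y) by auto.
      assert (sum_f_R0 (fun k => phi (l k) (r k) x) K <= sum_f_R0 (fun k => phi (l k) (r k) y) K)
        by (apply sum_Rle; intros; apply phi_mono; auto).
      lra.
    + pose proof (phi_mono (l (S K)) (r (S K)) x y Hxy).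
      assert (y - x <= sum_f_R0 (fun k => phi (l k) (r k) y) K - sum_f_R0 (fun k => phi (l k) (r k) x) K) by (apply IHK; lia).
      lra.
Qed.

Lemma GK_bound l r eps K x : (forall n, l n <= r n) ->
  (forall n, sum_f_R0 (fun k => r k - l k) n <= eps) -> GK l r K x <= eps.
Proof.
  intros H1 H2; eapply Rle_trans; [|apply (H2 K)]; unfold GK; apply sum_Rle; intros; apply phi_le; auto.
Qed.

Lemma G_exists (l r : nat -> R) eps : (forall n, l n <= r n) ->
  (forall n, sum_f_R0 (fun k => r k - l k) n <= eps) ->
  exists G : R -> R, (forall x y, x <= y -> G x <= G y) /\ (forall x, 0 <= G x <= eps) /\
    (forall n x y, l n <= x -> x <= y -> y <= r n -> y - x <= G y - G x).
Proof.
  intros H1 H2.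
  set (E := fun x z => exists K, z = GK l r K x).
  assert (Hb : forall x, bound (E x)).
  { intros x; exists eps; intros z [K ->]; apply GK_bound; auto. }
  assert (Hne : forall x, exists z, E x z) by (intros x; exists (GK l r 0 x); exists 0%nat; auto).
  exists (fun x => proj1_sig (completeness (E x) (Hb x) (Hne x))).
  assert (Hub : forall x K, GK l r K x <= proj1_sig (completeness (E x) (Hb x) (Hne x))).
  { intros x K; destruct (completeness (E x) (Hb x) (Hne x)) as [m [Hm1 Hm2]]; simpl.
    apply Hm1; exists K; auto. }
  assert (Hlub : forall x b, (forall K, GK l r K x <= b) -> proj1_sig (completeness (E x) (Hb x) (Hne x)) <= b).
  { intros x b Hb'; destruct (completeness (E x) (Hb x) (Hne x)) as [m [Hm1 Hm2]]; simpl.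
    apply Hm2; intros z [K ->]; auto. }
  split; [|split].
  - intros x y Hxy; apply Hlub; intros K; eapply Rle_trans; [apply GK_mono_x; eauto|apply Hub].
  - intros x; split.
    + eapply Rle_trans; [|apply (Hub x 0%nat)]; unfold GK; simpl; apply phi_nonneg.
    + apply Hlub; intros; apply GK_bound; auto.
  - intros n x y Hl Hxy Hr.
    assert (proj1_sig (completeness (E x) (Hb x) (Hne x)) <= proj1_sig (completeness (E y) (Hb y) (Hne y)) - (y - x)); [|lra].
    apply Hlub; intros K.
    pose proof (GK_mono_K l r K (Nat.max K n) x (Nat.le_max_l _ _)).
    pose proof (GK_inc l r n (Nat.max K n) x y (Nat.le_max_r _ _) Hxy Hl Hr).
    pose proof (Hub y (Nat.max K n)); lra.
Qed.

Lemma key (f : R -> R) (s t L : R) (N1 N2 : R -> Prop) :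
  s <= t -> null_set N1 -> null_set N2 -> 0 <= L ->
  (forall x y, s <= x <= t -> s <= y <= t -> Rabs (f x - f y) <= L * Rabs (x - y)) ->
  (forall x, s <= x < t -> ~ N1 x -> ~ N2 x -> exists d, d <= 0 /\ derivable_pt_lim f x d) ->
  f t <= f s.
Proof.
  intros Hst HN1 HN2 HL Hlip Hder.
  assert (Hlip' : forall x y, s <= x <= t -> s <= y <= t -> x <= y -> f y - f x <= L * (y - x)).
  { intros x y Hx Hy Hxy; specialize (Hlip y x Hy Hx).
    rewrite (Rabs_right (y - x)) in Hlip by lra.
    pose proof (Rle_abs (f y - f x)); lra. }
  assert (Hall : forall eps, 0 < eps -> f t - f s <= eps * (t - s + 2 * L)).
  2:{ destruct (Rle_dec (f t) (f s)) as [|Hn]; auto.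
      set (d := f t - f s).
      set (e := d / (2 * (t - s + 2 * L + 1))).
      assert (0 < d) by (unfold d; lra).
      assert (0 < e) by (unfold e; apply Rdiv_lt_0_compat; lra).
      specialize (Hall e H0).
      assert (e * (t - s + 2 * L + 1) = d / 2) by (unfold e; field; lra).
      assert (e * (t - s + 2 * L) <= e * (t - s + 2 * L + 1)) by (apply Rmult_le_compat_l; lra).
      fold d in Hall. lra. }
  intros eps Heps.
  destruct (HN1 eps Heps) as (l1 & r1 & Hlr1 & Hcov1 & Hsum1).
  destruct (HN2 eps Heps) as (l2 & r2 & Hlr2 & Hcov2 & Hsum2).
  destruct (G_exists l1 r1 eps Hlr1 Hsum1) as (G1 & G1m & G1b & G1i).
  destruct (G_exists l2 r2 eps Hlr2 Hsum2) as (G2 & G2m & G2b & G2i).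
  set (h := fun x => f x - eps * x - L * (G1 x + G2 x)).
  set (A := fun x => s <= x <= t /\ forall y, s <= y <= x -> h y <= h s).
  assert (HAb : bound A) by (exists t; intros x [Hx _]; lra).
  assert (HAs : exists x, A x) by (exists s; split; [lra|intros y Hy; replace y with s by lra; lra]).
  destruct (completeness A HAb HAs) as [x0 [Hx0u Hx0l]].
  assert (Hsx0 : s <= x0) by (apply Hx0u; destruct HAs; unfold A; split; [lra|intros y Hy; replace y with s by lra; lra]).
  assert (Hx0t : x0 <= t) by (apply Hx0l; intros x [Hx _]; lra).
  assert (Hmono : forall y z, s <= y <= t -> s <= z <= t -> y <= z -> h z <= h y + L * (z - y)).
  { intros y z Hy Hz Hyz; unfold h.
    pose proof (Hlip' y z Hy Hz Hyz). pose proof (G1m y z Hyz). pose proof (G2m y z Hyz).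
    assert (L * (G1 y + G2 y) <= L * (G1 z + G2 z)) by (apply Rmult_le_compat_l; lra).
    nra. }
  assert (Hbelow : forall y, s <= y < x0 -> h y <= h s).
  { intros y Hy.
    destruct (classic (exists x, A x /\ y < x)) as [[x [[Hx1 Hx2] Hx3]]|Hn].
    - apply Hx2; lra.
    - exfalso. assert (x0 <= y); [|lra].
      apply Hx0l; intros x Hx. apply Rnot_lt_le; intros Hlt; apply Hn; eauto. }
  assert (Hx0 : h x0 <= h s).
  { destruct (Req_dec x0 s) as [->|Hne]; [lra|].
    apply Rnot_lt_le; intros Hlt.
    set (d := h x0 - h s).
    set (eta := Rmin (x0 - s) (d / (L + 1)) / 2).
    assert (0 < d / (L + 1)) by (apply Rdiv_lt_0_compat; unfold d; lra).
    assert (Heta : 0 < eta /\ eta < x0 - s /\ eta < d / (L + 1)).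
    { unfold eta, Rmin; destruct Rle_dec; lra. }
    destruct Heta as (Heta1 & Heta2 & H0).
    assert (L * eta < d).
    { assert (eta * (L + 1) < d). { apply (Rmult_lt_compat_r (L+1)) in H0; [|lra].
        replace (d / (L + 1) * (L + 1)) with d in H0 by (field; lra). lra. }
      nra. }
    pose proof (Hbelow (x0 - eta) ltac:(lra)).
    pose proof (Hmono (x0 - eta) x0 ltac:(lra) ltac:(lra) ltac:(lra)) as H4.
    replace (x0 - (x0 - eta)) with eta in H4 by ring. unfold d in *; lra. }
  assert (HAx0 : A x0).
  { split; [lra|]. intros y Hy. destruct (Req_dec y x0) as [->|]; auto. apply Hbelow; lra. }
  destruct (Req_dec x0 t) as [<-|Hnt].
  - unfold h in Hx0. pose proof (G1b x0); pose proof (G1b s); pose proof (G2b x0); pose proof (G2b s).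
    assert (L * (G1 x0 + G2 x0) - L * (G1 s + G2 s) <= L * (2 * eps)).
    { assert (G1 x0 + G2 x0 - (G1 s + G2 s) <= 2 * eps) by lra.
      rewrite <- Rmult_minus_distr_l. apply Rmult_le_compat_l; lra. }
    nra.
  - exfalso.
    assert (Hloc : exists rho, 0 < rho /\ forall y, x0 <= y <= x0 + rho -> y <= t -> h y <= h x0).
    { destruct (classic (N1 x0)) as [H1|H1].
      { destruct (Hcov1 x0 H1) as [n Hn].
        exists (r1 n - x0); split; [lra|]. intros y Hy Hyt.
        pose proof (G1i n x0 y ltac:(lra) ltac:(lra) ltac:(lra)).
        pose proof (G2m x0 y ltac:(lra)).
        assert (0 <= eps * (y - x0)) by (apply Rmult_le_pos; lra).
        assert (L * (y - x0) <= L * ((G1 y + G2 y) - (G1 x0 + G2 x0))) by (apply Rmult_le_compat_l; lra).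
        pose proof (Hlip' x0 y ltac:(lra) ltac:(lra) ltac:(lra)).
        unfold h. lra. }
      destruct (classic (N2 x0)) as [H2|H2].
      { destruct (Hcov2 x0 H2) as [n Hn].
        exists (r2 n - x0); split; [lra|]. intros y Hy Hyt.
        pose proof (G2i n x0 y ltac:(lra) ltac:(lra) ltac:(lra)).
        pose proof (G1m x0 y ltac:(lra)).
        assert (0 <= eps * (y - x0)) by (apply Rmult_le_pos; lra).
        assert (L * (y - x0) <= L * ((G1 y + G2 y) - (G1 x0 + G2 x0))) by (apply Rmult_le_compat_l; lra).
        pose proof (Hlip' x0 y ltac:(lra) ltac:(lra) ltac:(lra)).
        unfold h. lra. }
      destruct (Hder x0 ltac:(lra) H1 H2) as [d [Hd Hdl]].
      destruct (Hdl eps Heps) as [[del Hdel] Hdel2].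
      exists (del / 2); split; [lra|]. intros y Hy Hyt.
      destruct (Req_dec y x0) as [->|Hyx]; [lra|].
      specialize (Hdel2 (y - x0) ltac:(intro; apply Hyx; lra) ltac:(rewrite Rabs_right; simpl; lra)).
      replace (x0 + (y - x0)) with y in Hdel2 by ring.
      pose proof (Rle_abs ((f y - f x0) / (y - x0) - d)).
      assert (H3 : (f y - f x0) / (y - x0) < eps) by lra.
      assert (f y - f x0 < eps * (y - x0)).
      { apply (Rmult_lt_compat_r (y - x0)) in H3; [|lra].
        replace ((f y - f x0) / (y - x0) * (y - x0)) with (f y - f x0) in H3 by (field; lra). lra. }
      pose proof (G1m x0 y ltac:(lra)). pose proof (G2m x0 y ltac:(lra)).
      assert (L * (G1 x0 + G2 x0) <= L * (G1 y + G2 y)) by (apply Rmult_le_compat_l; lra).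
      unfold h. lra. }
    destruct Hloc as [rho [Hrho Hloc]].
    set (z := Rmin t (x0 + rho)).
    assert (x0 < z /\ z <= t /\ z <= x0 + rho) by (unfold z, Rmin; destruct Rle_dec; lra).
    assert (A z).
    { split; [lra|]. intros y Hy. destruct (Rle_dec y x0).
      - apply HAx0; lra.
      - pose proof (Hloc y ltac:(lra) ltac:(lra)); lra. }
    pose proof (Hx0u z H0); lra.
Qed.

Definition LipE (s t : R) (f : R -> R) := exists L, 0 <= L /\
  forall x y, s <= x <= t -> s <= y <= t -> Rabs (f x - f y) <= L * Rabs (x - y).

Lemma LipE_bound s t f : s <= t -> LipE s t f -> exists B, forall x, s <= x <= t -> Rabs (f x) <= B.
Proof.
  intros Hst [L [HL H]]; exists (Rabs (f s) + L * (t - s)); intros x Hx.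
  specialize (H x s Hx ltac:(lra)).
  rewrite (Rabs_right (x - s)) in H by lra.
  pose proof (Rabs_triang (f x - f s) (f s)). replace (f x - f s + f s) with (f x) in H0 by ring.
  assert (L * (x - s) <= L * (t - s)) by (apply Rmult_le_compat_l; lra). lra.
Qed.

Lemma LipE_const s t k : LipE s t (fun _ => k).
Proof. exists 0; split; [lra|]; intros; replace (k - k) with 0 by ring; rewrite Rabs_R0; lra. Qed.

Lemma LipE_plus s t f g : LipE s t f -> LipE s t g -> LipE s t (fun x => f x + g x).
Proof.
  intros [L1 [HL1 H1]] [L2 [HL2 H2]]; exists (L1 + L2); split; [lra|]; intros x y Hx Hy.
  specialize (H1 x y Hx Hy); specialize (H2 x y Hx Hy).
  replace (f x + g x - (f y + g y)) with ((f x - f y) + (g x - g y)) by ring.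
  pose proof (Rabs_triang (f x - f y) (g x - g y)). lra.
Qed.

Lemma LipE_mult s t f g : s <= t -> LipE s t f -> LipE s t g -> LipE s t (fun x => f x * g x).
Proof.
  intros Hst Hf Hg.
  destruct (LipE_bound s t f Hst Hf) as [Bf HBf]; destruct (LipE_bound s t g Hst Hg) as [Bg HBg].
  destruct Hf as [L1 [HL1 H1]]; destruct Hg as [L2 [HL2 H2]].
  assert (0 <= Bf) by (pose proof (HBf s ltac:(lra)); pose proof (Rabs_pos (f s)); lra).
  assert (0 <= Bg) by (pose proof (HBg s ltac:(lra)); pose proof (Rabs_pos (g s)); lra).
  exists (Bf * L2 + Bg * L1); split; [nra|]; intros x y Hx Hy.
  specialize (H1 x y Hx Hy); specialize (H2 x y Hx Hy).
  replace (f x * g x - f y * g y) with (f x * (g x - g y) + g y * (f x - f y)) by ring.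
  pose proof (Rabs_triang (f x * (g x - g y)) (g y * (f x - f y))).
  rewrite !Rabs_mult in H3.
  pose proof (HBf x Hx); pose proof (HBg y Hy).
  assert (Rabs (f x) * Rabs (g x - g y) <= Bf * (L2 * Rabs (x - y)))
    by (apply Rmult_le_compat; auto using Rabs_pos).
  assert (Rabs (g y) * Rabs (f x - f y) <= Bg * (L1 * Rabs (x - y)))
    by (apply Rmult_le_compat; auto using Rabs_pos).
  lra.
Qed.

Lemma LipE_deriv s t f f' : s <= t ->
  (forall x, s <= x <= t -> derivable_pt_lim f x (f' x)) ->
  (exists B, forall x, s <= x <= t -> Rabs (f' x) <= B) -> LipE s t f.
Proof.
  intros Hst Hd [B HB].
  assert (0 <= B) by (pose proof (HB s ltac:(lra)); pose proof (Rabs_pos (f' s)); lra).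
  exists B; split; auto; intros x y Hx Hy.
  assert (Hgen : forall x y, s <= x <= t -> s <= y <= t -> x < y -> Rabs (f x - f y) <= B * Rabs (x - y)).
  { clear x y Hx Hy; intros x y Hx Hy Hxy.
    destruct (MVT_cor2 f f' x y Hxy) as [z [Hz1 Hz2]].
    { intros z Hz; apply Hd; lra. }
    rewrite Rabs_minus_sym, Hz1, (Rabs_minus_sym x y), Rabs_mult.
    apply Rmult_le_compat_r; [apply Rabs_pos|]. apply HB; lra. }
  destruct (Rtotal_order x y) as [Hlt|[->|Hgt]].
  - auto.
  - unfold Rminus; rewrite !Rplus_opp_r, Rabs_R0; lra.
  - rewrite Rabs_minus_sym, (Rabs_minus_sym x y); auto.
Qed.

Lemma dext f x l l' : derivable_pt_lim f x l -> l = l' -> derivable_pt_lim f x l'.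
Proof. intros H ->; auto. Qed.
Lemma dmul f g x df dg : derivable_pt_lim f x df -> derivable_pt_lim g x dg ->
  derivable_pt_lim (fun y => f y * g y) x (df * g x + f x * dg).
Proof. intros; exact (derivable_pt_lim_mult f g x df dg H H0). Qed.
Lemma dplus f g x df dg : derivable_pt_lim f x df -> derivable_pt_lim g x dg ->
  derivable_pt_lim (fun y => f y + g y) x (df + dg).
Proof. intros; exact (derivable_pt_lim_plus f g x df dg H H0). Qed.
Lemma dconst k x : derivable_pt_lim (fun _ => k) x 0.
Proof. exact (derivable_pt_lim_const k x). Qed.
Lemma dexp d x : derivable_pt_lim (fun y => exp (d * y)) x (exp (d * x) * d).
Proof.
  assert (H1 : derivable_pt_lim (fun y => d * y) x (d * 1)).
  { exact (derivable_pt_lim_scal id d x 1 (derivable_pt_lim_id x)). }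
  pose proof (derivable_pt_lim_comp (fun y => d * y) exp x (d * 1) (exp (d * x)) H1 (derivable_pt_lim_exp _)).
  eapply dext; [exact H| ring].
Qed.

Lemma concave_min b c C m a : 0 <= a <= C ->
  Rmin (c*c*b - m*m) (c*c*(b+C) - (C-m)*(C-m)) <= c*c*(b+a) - (a-m)*(a-m).
Proof.
  intros Ha. unfold Rmin; destruct Rle_dec as [Hr|Hr].
  - destruct (Rle_dec 0 (c*c - a + 2*m)).
    + assert (c*c*(b+a) - (a-m)*(a-m) - (c*c*b - m*m) = a * (c*c - a + 2*m)) by ring.
      assert (0 <= a * (c*c - a + 2*m)) by (apply Rmult_le_pos; lra). lra.
    + assert (c*c*(b+a) - (a-m)*(a-m) - (c*c*(b+C) - (C-m)*(C-m)) = (C - a) * (a + C - c*c - 2*m)) by ring.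
      assert (0 <= (C - a) * (a + C - c*c - 2*m)) by (apply Rmult_le_pos; lra). lra.
  - destruct (Rle_dec 0 (c*c - a + 2*m)).
    + assert (c*c*(b+a) - (a-m)*(a-m) - (c*c*b - m*m) = a * (c*c - a + 2*m)) by ring.
      assert (0 <= a * (c*c - a + 2*m)) by (apply Rmult_le_pos; lra). lra.
    + assert (c*c*(b+a) - (a-m)*(a-m) - (c*c*(b+C) - (C-m)*(C-m)) = (C - a) * (a + C - c*c - 2*m)) by ring.
      assert (0 <= (C - a) * (a + C - c*c - 2*m)) by (apply Rmult_le_pos; lra). lra.
Qed.

Lemma quad_lower q1 q2 q3 dm T x y : 0 < q1 -> 0 < q3 -> 0 < dm -> dm <= q1*q3 - q2*q2 ->
  q1 + q3 <= T ->
  dm / T * (x*x + y*y) <= q1*x*x + 2*q2*x*y + q3*y*y.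
Proof.
  intros H1 H3 Hd Hdet HT.
  set (Q := q1*x*x + 2*q2*x*y + q3*y*y).
  assert (Hid : (q1+q3)*Q - (q1*q3 - q2*q2)*(x*x+y*y) = (q1*x+q2*y)*(q1*x+q2*y) + (q2*x+q3*y)*(q2*x+q3*y)) by (unfold Q; ring).
  assert (HW : 0 <= x*x+y*y) by (pose proof (Rle_0_sqr x); pose proof (Rle_0_sqr y); unfold Rsqr in *; lra).
  assert (Hs : 0 <= (q1*x+q2*y)*(q1*x+q2*y) + (q2*x+q3*y)*(q2*x+q3*y)) by (pose proof (Rle_0_sqr (q1*x+q2*y)); pose proof (Rle_0_sqr (q2*x+q3*y)); unfold Rsqr in *; lra).
  assert (H4 : dm * (x*x+y*y) <= (q1*q3 - q2*q2)*(x*x+y*y)) by (apply Rmult_le_compat_r; lra).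
  assert (H5 : dm * (x*x+y*y) <= (q1+q3)*Q) by lra.
  assert (HQ : 0 <= Q).
  { apply Rnot_lt_le; intro Hn. assert ((q1+q3)*Q < 0) by (apply Rmult_pos_neg; lra).
    assert (0 <= dm * (x*x+y*y)) by (apply Rmult_le_pos; lra). lra. }
  assert (H6 : (q1+q3)*Q <= T*Q) by (apply Rmult_le_compat_r; lra).
  assert (0 < T) by lra.
  unfold Rdiv. rewrite Rmult_assoc, (Rmult_comm (/T)), <- Rmult_assoc.
  apply (Rmult_le_reg_r T); [lra|]. rewrite Rmult_assoc, Rinv_l by lra. fold Q. lra.
Qed.

Lemma exp_le x y : x <= y -> exp x <= exp y.
Proof. intros H; destruct (Rle_lt_or_eq_dec _ _ H) as [H' | ->]; [left; apply exp_increasing; auto|lra]. Qed.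

Lemma interval_between lo hi s t x : in_open_interval lo hi s -> in_open_interval lo hi t ->
  s <= x <= t -> in_open_interval lo hi x.
Proof. unfold in_open_interval; destruct lo, hi; intuition lra. Qed.

Lemma choose_m b c C : 0 < b -> 0 < c -> 0 <= C -> C < c * Rmax c (2 * sqrt b) ->
  exists m, 0 <= m /\ 0 < c*c*b - m*m /\ 0 < c*c*(b+C) - (C-m)*(C-m).
Proof.
  intros hb hc hC hCb.
  destruct (Rlt_dec C (c*c)) as [Hl|Hl].
  - exists 0; split; [lra|split].
    + assert (0 < c*c) by nra. nra.
    + assert (C*C <= C*(c*c)) by (apply Rmult_le_compat_l; lra).
      assert (0 < c*c*b) by (apply Rmult_lt_0_compat; nra). nra.
  - assert (Hs : C < 2 * c * sqrt b).
    { unfold Rmax in hCb; destruct Rle_dec; [lra|]. lra. }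
    assert (Hsq : sqrt b * sqrt b = b) by (apply sqrt_sqrt; lra).
    assert (Hsp : 0 <= sqrt b) by apply sqrt_pos.
    assert (HC2 : C * C < 4 * (c*c*b)).
    { assert (C*C < (2*c*sqrt b)*(2*c*sqrt b)) by (apply Rmult_le_0_lt_compat; lra).
      replace ((2*c*sqrt b)*(2*c*sqrt b)) with (4*(c*c)*(sqrt b * sqrt b)) in H by ring.
      rewrite Hsq in H. lra. }
    exists (C/2); split; [lra|split].
    + nra.
    + assert (0 <= c*c*C) by (apply Rmult_le_pos; nra). nra.
Qed.

Theorem theorem2p1 (b c C : R) (lo hi : option R) (a : R -> R)
  (hb : 0 < b) (hc : 0 < c) (hC0 : 0 <= C)
  (hCbound : C < c * Rmax c (2 * sqrt b))
  (ha : ae_on (in_open_interval lo hi) (fun t => 0 <= a t <= C)) :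
  exists delta M : R, 0 < delta /\ 0 < M /\
    forall u u1 : R -> R,
      is_W2inf_loc_solution (in_open_interval lo hi) b c a u u1 ->
      forall s t, in_open_interval lo hi s -> in_open_interval lo hi t -> s <= t ->
        (u t)^2 + (u1 t)^2 <= M * ((u s)^2 + (u1 s)^2) * exp (- delta * (t - s)).
Proof.
  destruct (choose_m b c C hb hc hC0 hCbound) as (m & Hm0 & HD0 & HDC).
  set (alpha := c*c/2 + b + m).
  set (dmin := Rmin (c*c*b - m*m) (c*c*(b+C) - (C-m)*(C-m))).
  assert (Hdmin : 0 < dmin) by (unfold dmin, Rmin; destruct Rle_dec; lra).
  set (T := c*(b+C) + c).
  assert (HT : 0 < T) by (unfold T; nra).
  set (kappa := dmin / T).
  assert (Hkappa : 0 < kappa) by (unfold kappa; apply Rdiv_lt_0_compat; lra).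
  set (Lam := alpha + c/2 + 1).
  assert (Halpha : 0 < alpha) by (unfold alpha; nra).
  assert (HLam : 0 < Lam) by (unfold Lam; lra).
  set (delta := kappa / Lam).
  assert (Hdelta : 0 < delta) by (unfold delta; apply Rdiv_lt_0_compat; lra).
  set (mu := (alpha - c*c/4) / (alpha + 1)).
  assert (Hmu : 0 < mu) by (unfold mu; apply Rdiv_lt_0_compat; unfold alpha; nra).
  exists delta, (Lam / mu). split; [auto|split; [apply Rdiv_lt_0_compat; lra|]].
  intros u u1 [Hd [Hlip Hae]] s t Js Jt Hst.
  destruct ha as [Na [HNa Ha]]. destruct Hae as [Nu [HNu Hu]].
  set (Vq := fun x y => alpha * (x * x) + c * (x * y) + y * y).
  assert (HVup : forall x y, Vq x y <= Lam * (x*x + y*y)).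
  { intros x y; unfold Vq, Lam.
    assert (0 <= (x-y)*(x-y)) by apply Rle_0_sqr.
    assert (0 <= x*x) by apply Rle_0_sqr.
    assert (0 <= alpha * (y*y)) by (apply Rmult_le_pos; [lra|apply Rle_0_sqr]).
    nra. }
  assert (HVlow : forall x y, mu * (x*x + y*y) <= Vq x y).
  { intros x y. unfold mu, Vq.
    pose proof (quad_lower alpha (c/2) 1 (alpha - c*c/4) (alpha + 1) x y Halpha ltac:(lra)
      ltac:(unfold alpha; nra) ltac:(lra) ltac:(lra)).
    replace (alpha * x * x + 2 * (c / 2) * x * y + 1 * y * y) with (alpha * (x * x) + c * (x * y) + y * y) in H by field.
    exact H. }
  set (g := fun x => (alpha * (u x * u x) + c * (u x * u1 x) + u1 x * u1 x) * exp (delta * x)).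
  assert (HJ : forall x, s <= x <= t -> in_open_interval lo hi x) by (intros; apply (interval_between lo hi s t); auto).
  assert (Lu1 : LipE s t u1).
  { destruct (Hlip s t Js Jt) as [L HL]. exists (Rabs L); split; [apply Rabs_pos|].
    intros x y Hx Hy. eapply Rle_trans; [apply HL; auto|].
    apply Rmult_le_compat_r; [apply Rabs_pos|apply Rle_abs]. }
  assert (Lu : LipE s t u).
  { apply (LipE_deriv s t u u1 Hst); [intros; apply Hd; auto|].
    destruct (LipE_bound s t u1 Hst Lu1) as [B HB]; eauto. }
  assert (Le : LipE s t (fun x => exp (delta * x))).
  { apply (LipE_deriv s t _ (fun x => exp (delta * x) * delta) Hst); [intros; apply dexp|].
    exists (exp (delta * t) * delta); intros x Hx.
    rewrite Rabs_right; [|left; apply Rmult_lt_0_compat; [apply exp_pos|lra]].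
    apply Rmult_le_compat_r; [lra|]. apply exp_le. apply Rmult_le_compat_l; lra. }
  assert (Lg : LipE s t g).
  { unfold g. apply LipE_mult; auto.
    apply LipE_plus; [apply LipE_plus|].
    - apply LipE_mult; auto; [apply LipE_const|]. apply LipE_mult; auto.
    - apply LipE_mult; auto; [apply LipE_const|]. apply LipE_mult; auto.
    - apply LipE_mult; auto. }
  destruct Lg as [Lg [HLg0 HLg]].
  assert (Hgts : g t <= g s).
  { apply (key g s t Lg Na Nu Hst HNa HNu HLg0 HLg).
    intros x Hx HxNa HxNu.
    assert (Jx : in_open_interval lo hi x) by (apply HJ; lra).
    destruct (Ha x Jx HxNa) as [Ha0 HaC].
    pose proof (Hu x Jx HxNu) as Hu1.
    pose proof (Hd x Jx) as Hu0.
    set (w := - (c * u1 x) - (b + a x) * u x) in Hu1.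
    eexists; split.
    2:{ unfold g. apply dmul; [|apply dexp].
        apply dplus; [apply dplus|].
        - apply dmul; [apply dconst|]. apply dmul; eauto.
        - apply dmul; [apply dconst|]. apply dmul; eauto.
        - apply dmul; eauto. }
    set (X := u x). set (Y := u1 x). fold X Y in w.
    set (E := exp (delta * x)).
    assert (HE : 0 < E) by apply exp_pos.
    pose proof (quad_lower (c*(b + a x)) (a x - m) c dmin T X Y ltac:(nra) hc Hdmin
      ltac:(pose proof (concave_min b c C m (a x) ltac:(lra)); fold dmin in H; nra)
      ltac:(unfold T; nra)) as HQ.
    fold kappa in HQ.
    pose proof (HVup X Y) as HV. unfold Vq in HV.
    assert (HdV : delta * (alpha * (X * X) + c * (X * Y) + Y * Y) <= kappa * (X*X + Y*Y)).
    { unfold delta. apply (Rmult_le_compat_l (kappa / Lam)) in HV; [|left; apply Rdiv_lt_0_compat; lra].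
      replace (kappa / Lam * (Lam * (X * X + Y * Y))) with (kappa * (X*X + Y*Y)) in HV by (field; lra). lra. }
    assert (Hsum : (alpha * (2 * X * Y) + c * (Y * Y + X * w) + 2 * Y * w) + delta * (alpha * (X * X) + c * (X * Y) + Y * Y) <= 0).
    { unfold w. unfold alpha. unfold alpha in HdV. nra. }
    set (S := (alpha * (2 * X * Y) + c * (Y * Y + X * w) + 2 * Y * w + delta * (alpha * (X * X) + c * (X * Y) + Y * Y))) in Hsum.
    apply Rle_trans with (S * E).
    { right. unfold S, E, X, Y, w. cbv beta. clearbody alpha delta. ring. }
    assert (0 <= (- S) * E) by (apply Rmult_le_pos; lra). lra. }
  unfold g in Hgts.
  pose proof (HVlow (u t) (u1 t)) as H1. pose proof (HVup (u s) (u1 s)) as H2. unfold Vq in H1, H2.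
  set (Vt := alpha * (u t * u t) + c * (u t * u1 t) + u1 t * u1 t) in *.
  set (Vs := alpha * (u s * u s) + c * (u s * u1 s) + u1 s * u1 s) in *.
  set (Ex := exp (- delta * (t - s))).
  assert (HEx : exp (delta * t) * Ex = exp (delta * s)).
  { unfold Ex. rewrite <- exp_plus. f_equal. ring. }
  assert (HEp : 0 < Ex) by apply exp_pos.
  assert (Ht : Vt <= Vs * Ex).
  { apply (Rmult_le_reg_r (exp (delta * t))); [apply exp_pos|].
    replace (Vs * Ex * exp (delta * t)) with (Vs * exp (delta * s)) by (rewrite <- HEx; ring). lra. }
  replace ((u t)^2 + (u1 t)^2) with (u t * u t + u1 t * u1 t) by ring.
  replace ((u s)^2 + (u1 s)^2) with (u s * u s + u1 s * u1 s) by ring.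
  fold Ex.
  apply (Rmult_le_reg_l mu); [lra|].
  replace (mu * (Lam / mu * (u s * u s + u1 s * u1 s) * Ex)) with (Lam * (u s * u s + u1 s * u1 s) * Ex) by (field; lra).
  assert (Vs * Ex <= Lam * (u s * u s + u1 s * u1 s) * Ex) by (apply Rmult_le_compat_r; lra).
  lra.
Qed.
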